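(* Let $L\subseteq\mathbb{Z}^{(\mathbb{N})}$ be a $\mathrm{Sym}$-invariant lattice, and suppose $\mathcal{H}$ is a finite equivariant Hilbert basis of the monoid $M=L\cap\mathbb{Z}_{\ge0}^{(\mathbb{N})}$. Let $g_L=\gcd(u_i\mid\mathbf{u}=(u_i)_{i\in\mathbb{N}}\in L,\ i\in\mathbb{N})$ and $\mathbf{g}_L=g_L(\mathbf{e}_1-\mathbf{e}_2)$. Then $L$ has a finite equivariant Graver basis $\mathcal{G}$ with $\pm\mathcal{H}\subseteq\mathcal{G}\subseteq\pm\mathcal{H}\cup\{\pm\mathbf{g}_L\}$.
   Context: $\mathbb{N}=\{1,2,\dots\}$. $\mathbb{Z}^{(\mathbb{N})}$ is the group of finitely supported integer sequences with standard basis $\mathbf{e}_i$, $\mathbb{Z}_{\ge0}^{(\mathbb{N})}$ its nonnegative elements; a lattice is a subgroup. $\mathrm{Sym}$ is the group of permutations of $\mathbb{N}$ fixing all but finitely many points, acting by $\sigma(\mathbf{e}_i)=\mathbf{e}_{\sigma(i)}$. With $\mathbf{u}\sqsubseteq\mathbf{v}$ iff $u_iv_i\ge0$ and $|u_i|\le|v_i|$ for all $i$, the Graver basis of $L$ is the set of $\sqsubseteq$-minimal elements of $L\setminus\{\mathbf{0}\}$; $\mathcal{G}$ is an equivariant Graver basis if $\mathrm{Sym}(\mathcal{G})=\{\sigma(\mathbf{g})\mid\sigma\in\mathrm{Sym},\mathbf{g}\in\mathcal{G}\}$ is the Graver basis. A Hilbert basis of a monoid is a minimal generating set (w.r.t.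 $\mathbb{Z}_{\ge0}$-combinations); $\mathcal{H}$ is an equivariant Hilbert basis of a $\mathrm{Sym}$-invariant monoid $M$ if $\mathrm{Sym}(\mathcal{H})$ is a Hilbert basis of $M$. $\pm A=A\cup(-A)$. *)

(* Defs.v *)
From mathcomp Require Import all_boot all_order all_algebra.
From Stdlib Require List.
Set Implicit Arguments. Unset Strict Implicit. Unset Printing Implicit Defensive.
Import Order.TTheory GRing.Theory Num.Theory.
Local Open Scope ring_scope.

(* Vectors of Z^(N).  Coordinates are indexed by nat, with index k standing
   for the paper's index k+1 (so e_1 is index 0, e_2 is index 1). *)
Definition vec := nat -> int.

Definition fin_supp (u : vec) : Prop := exists n, forall i, (n <= i)%N -> u i = 0.

Definition vzero : vec := fun _ => 0.
Definition vopp (u : vec) : vec := fun i => - u i.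
Definition vsub (u v : vec) : vec := fun i => u i - v i.

Definition veq (u v : vec) : Prop := forall i, u i = v i.

Definition is_lattice (L : vec -> Prop) : Prop :=
  (forall u, L u -> fin_supp u) /\ L vzero /\ (forall u v, L u -> L v -> L (vsub u v)).

(* Sym: permutations of N fixing all but finitely many points
   (a finitary injective map nat -> nat is automatically a bijection). *)
Definition is_fperm (s : nat -> nat) : Prop :=
  injective s /\ exists n, forall i, (n <= i)%N -> s i = i.

(* w = sigma(u), where sigma(e_i) = e_{sigma i}, i.e. w_{sigma i} = u_i *)
Definition is_act (s : nat -> nat) (u w : vec) : Prop := forall i, w (s i) = u i.

Definition sym_invariant (L : vec -> Prop) : Prop :=
  forall s u w, is_fperm s -> L u -> is_act s u w -> L w.

Definition sym_orbit (A : vec -> Prop) (w : vec) : Prop :=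
  exists s u, is_fperm s /\ A u /\ is_act s u w.

Definition memv (u : vec) (G : seq vec) : Prop := exists v, List.In v G /\ veq v u.

Definition setof (G : seq vec) : vec -> Prop := fun u => memv u G.

Definition conf_le (u v : vec) : Prop :=
  forall i, 0 <= u i * v i /\ `|u i| <= `|v i|.

Definition graver (L : vec -> Prop) (w : vec) : Prop :=
  L w /\ ~ veq w vzero /\
  forall v, L v -> ~ veq v vzero -> conf_le v w -> veq v w.

Definition equivariant_graver_basis (L : vec -> Prop) (G : seq vec) : Prop :=
  forall w, sym_orbit (setof G) w <-> graver L w.

Definition nn_comb (S : vec -> Prop) (v : vec) : Prop :=
  exists l : seq (nat * vec),
    (forall p, List.In p l -> S p.2) /\
    forall i, v i = \sum_(p <- l) (p.1)%:Z * p.2 i.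

Definition generates (S M : vec -> Prop) : Prop :=
  (forall v, S v -> M v) /\ (forall v, M v -> nn_comb S v).

Definition hilbert_basis (S M : vec -> Prop) : Prop :=
  generates S M /\
  forall S', (forall v, S' v -> S v) -> generates S' M -> forall v, S v -> S' v.

Definition equivariant_hilbert_basis (H : seq vec) (M : vec -> Prop) : Prop :=
  hilbert_basis (sym_orbit (setof H)) M.

Definition nonneg_part (L : vec -> Prop) : vec -> Prop :=
  fun u => L u /\ forall i, 0 <= u i.

Definition is_gcd_entries (L : vec -> Prop) (g : int) : Prop :=
  0 <= g /\ (forall u i, L u -> (g %| u i)%Z) /\
  (forall d : int, (forall u i, L u -> (d %| u i)%Z) -> (d %| g)%Z).

Definition gvec (g : int) : vec :=
  fun i => if i == 0%N then g else if i == 1%N then - g else 0.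

(* Main.v *)
Require Import Defs.
From mathcomp Require Import all_boot all_order all_algebra.
From Stdlib Require List.
From Stdlib Require Import FunctionalExtensionality Classical.
From mathcomp Require Import zify.
Import Order.TTheory GRing.Theory Num.Theory.
Local Open Scope ring_scope.
Set Implicit Arguments. Unset Strict Implicit.

Lemma vext (u v : vec) : veq u v -> u = v.
Proof. exact: functional_extensionality. Qed.

Definition tr (x y k : nat) : nat := if k == x then y else if k == y then x else k.

Lemma tr_inv x y k : tr x y (tr x y k) = k.
Proof.
rewrite /tr; case: (eqVneq k x) => [->|hkx].
  by rewrite eqxx; case: (eqVneq y x) => [->|_] //; rewrite eqxx.
case: (eqVneq k y) => [->|hky]; first by rewrite eqxx.
by rewrite (negbTE hkx) (negbTE hky).
Qed.

Lemma tr_eq x y k i : (tr x y k == i) = (k == tr x y i).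
Proof. by apply/eqP/eqP => [<-|->]; rewrite tr_inv. Qed.

Lemma tr_inj x y : injective (tr x y).
Proof. exact: can_inj (tr_inv x y). Qed.

Lemma tr_l x y : tr x y x = y.
Proof. by rewrite /tr eqxx. Qed.

Lemma tr_other x y z : z != x -> z != y -> tr x y z = z.
Proof. by move=> h1 h2; rewrite /tr (negbTE h1) (negbTE h2). Qed.

Lemma tr_fperm x y : is_fperm (tr x y).
Proof.
split; first exact: tr_inj.
exists (maxn x y).+1 => i hi; apply: tr_other; apply/eqP; lia.
Qed.

Lemma fperm_comp f g : is_fperm f -> is_fperm g -> is_fperm (fun k => f (g k)).
Proof.
move=> [hf [n hn]] [hg [m hm]]; split; first exact: inj_comp.
exists (maxn n m) => i hi; rewrite hm ?hn //; lia.
Qed.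

Lemma fperm_surj s : is_fperm s -> forall m, exists k, s k = m.
Proof.
move=> [hinj [n hn]] m; case: (leqP n m) => hm; first by exists m; exact: hn.
have hlt : forall i, (i < n)%N -> (s i < n)%N.
  move=> i hi; rewrite ltnNge; apply/negP => hsi.
  have := hn _ hsi; move/hinj => e; lia.
have uq : uniq (map s (iota 0 n)) by rewrite map_inj_uniq ?iota_uniq.
have sub : {subset map s (iota 0 n) <= iota 0 n}.
  move=> x /mapP [i]; rewrite !mem_iota => hi ->; rewrite add0n hlt //; lia.
have [_ eqi] := uniq_min_size uq sub (eq_leq (esym (size_map _ _))).
have : m \in map s (iota 0 n) by rewrite eqi mem_iota; lia.
by case/mapP => k _ ->; exists k.
Qed.

Lemma two_perm i j : i != j -> exists s, is_fperm s /\ s 0%N = i /\ s 1%N = j.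
Proof.
move=> hij; set m := tr 0 i j.
exists (fun k => tr 0 i (tr 1 m k)); split; first exact: fperm_comp (tr_fperm _ _) (tr_fperm _ _).
have hm : m != 0%N.
  apply/eqP => e; have ej : j = i by rewrite -(tr_inv 0 i j) -/m e tr_l.
  by rewrite ej eqxx in hij.
split; last by rewrite tr_l tr_inv.
by rewrite (@tr_other 1 m 0) ?tr_l // eq_sym.
Qed.

Lemma Lperm L v x y : sym_invariant L -> L v -> L (fun k => v (tr x y k)).
Proof.
move=> hS hv; apply: (hS (tr x y) v) => //; first exact: tr_fperm.
by move=> i /=; rewrite tr_inv.
Qed.

Definition ge (c : int) (i j : nat) : vec :=
  fun k => if k == i then c else if k == j then - c else 0.
Definition ev (c : int) (a : nat) : vec := fun k => if k == a then c else 0.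

Lemma ge_tr c i j x y : (fun k => ge c i j (tr x y k)) = ge c (tr x y i) (tr x y j).
Proof. by apply: vext => k; rewrite /ge !tr_eq. Qed.

Lemma L_ge_move L c i j a b : sym_invariant L -> L (ge c i j) -> i != j -> a != b ->
  L (ge c a b).
Proof.
move=> hS hL hij hab.
have h1 := @Lperm L _ i a hS hL; rewrite ge_tr tr_l in h1.
set j1 := tr i a j in h1.
have hj1 : a != j1.
  apply/eqP => e; have : tr i a j = tr i a i by rewrite tr_l; exact: (esym e).
  by move/tr_inj => ej; rewrite ej eqxx in hij.
have h2 := @Lperm L _ j1 b hS h1; rewrite ge_tr tr_l tr_other // in h2.
Qed.
Lemma L_opp L u : is_lattice L -> L u -> L (vopp u).
Proof.
move=> [_ [h0 hs]] hu.
suff -> : vopp u = vsub vzero u by apply: hs.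
by apply: vext => i; rewrite /vsub /vopp /vzero sub0r.
Qed.

Lemma L_ge_entry L u i : is_lattice L -> sym_invariant L -> L u -> L (ge (u i) 0 1).
Proof.
move=> hL hS hu; have [n hn] := hL.1 u hu.
set j := maxn n i.+1.
have hj0 : u j = 0 by apply: hn; lia.
have hij : i != j by apply/eqP; lia.
have hji : j != i by rewrite eq_sym.
have h := hL.2.2 _ _ hu (@Lperm L u i j hS hu).
have e : vsub u (fun k => u (tr i j k)) = ge (u i) i j.
  apply: vext => k; rewrite /vsub /ge /tr.
  case: (eqVneq k i) => [->|hki]; first by rewrite hj0 subr0.
  case: (eqVneq k j) => [->|hkj]; first by rewrite hj0 sub0r.
  by rewrite subrr.
rewrite e in h; exact: L_ge_move hS h hij _.
Qed.

Lemma I_sub L a b : is_lattice L -> L (ge a 0 1) -> L (ge b 0 1) -> L (ge (a - b) 0 1).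
Proof.
move=> hL ha hb; have := hL.2.2 _ _ ha hb.
suff -> : vsub (ge a 0 1) (ge b 0 1) = ge (a - b) 0 1 by [].
apply: vext => k; rewrite /vsub /ge; case: ifP => _; first by [].
case: ifP => _; [lia | by rewrite subr0].
Qed.

Lemma I_0 L : is_lattice L -> L (ge 0 0 1).
Proof.
move=> hL; suff -> : ge 0 0 1 = vzero by exact: hL.2.1.
by apply: vext => k; rewrite /ge /vzero; case: ifP => _ //; case: ifP => _; rewrite ?oppr0.
Qed.

Lemma I_opp L a : is_lattice L -> L (ge a 0 1) -> L (ge (- a) 0 1).
Proof. by move=> hL ha; have := I_sub hL (I_0 hL) ha; rewrite sub0r. Qed.

Lemma I_add L a b : is_lattice L -> L (ge a 0 1) -> L (ge b 0 1) -> L (ge (a + b) 0 1).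
Proof. by move=> hL ha hb; have := I_sub hL ha (I_opp hL hb); rewrite opprK. Qed.

Lemma I_mul L a (k : int) : is_lattice L -> L (ge a 0 1) -> L (ge (k * a) 0 1).
Proof.
move=> hL ha.
have hn : forall n : nat, L (ge (n%:Z * a) 0 1).
  elim=> [|n IH]; first by rewrite mul0r; exact: I_0.
  by rewrite intS mulrDl mul1r; exact: I_add.
case: k => n; first exact: hn.
by rewrite NegzE mulNr; apply: I_opp.
Qed.

Lemma ex_min (Q : nat -> Prop) : (exists n, Q n) -> exists n, Q n /\ forall m, (m < n)%N -> ~ Q m.
Proof.
move=> [n hn]; elim: n {-2}n (leqnn n) hn => [|N IH] n hn hQ.
  by exists n; split=> // m hm; lia.
case: (classic (exists m, (m < n)%N /\ Q m)) => [[m [hm hQm]]|hno].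
  by apply: (IH m) => //; lia.
by exists n; split=> // m hm hQm; apply: hno; exists m.
Qed.

Lemma L_gL L g : is_lattice L -> sym_invariant L -> is_gcd_entries L g -> L (ge g 0 1).
Proof.
move=> hL hS [hg0 [hdiv hmax]].
case: (classic (exists u i, L u /\ u i <> 0)) => [[u [i [hu hui]]]|hno]; last first.
  have : (0 %| g)%Z.
    apply: hmax => u i hu; rewrite dvd0z; apply/eqP; apply: NNPP => h; apply: hno.
    by exists u, i.
  by rewrite dvd0z => /eqP ->; exact: I_0.
have hx := @L_ge_entry L u i hL hS hu.
have hpos : exists n, (0 < n)%N /\ L (ge n%:Z 0 1).
  exists (absz (u i)); split; first by lia.
  have : (absz (u i))%:Z = u i \/ (absz (u i))%:Z = - u i by lia.
  by case => ->; [done | exact: I_opp].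
have [d [[hd hId] hmin]] := ex_min hpos.
have hdvd : forall v k, L v -> (d%:Z %| v k)%Z.
  move=> v k hv; have hy := @L_ge_entry L v k hL hS hv.
  set y := v k in hy *.
  have hr : L (ge (y %% d%:Z)%Z 0 1).
    have e : (y %% d%:Z)%Z = y - (y %/ d%:Z)%Z * d%:Z.
      by rewrite {2}(divz_eq y d%:Z) addrC addKr.
    rewrite e; apply: I_sub => //; exact: I_mul.
  have r0 : 0 <= (y %% d%:Z)%Z by apply: modz_ge0; lia.
  have r1 : (y %% d%:Z)%Z < d%:Z by apply: ltz_pmod; lia.
  apply/dvdz_mod0P; apply: NNPP => hne.
  apply: (hmin (absz (y %% d%:Z)%Z)); first by lia.
  split; first by lia.
  by have -> : (absz (y %% d%:Z)%Z)%:Z = (y %% d%:Z)%Z by lia.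
have /dvdzP [q ->] := hmax _ hdvd.
exact: I_mul.
Qed.
Lemma sum_ge0 (l : seq (nat * vec)) (F : nat * vec -> int) :
  (forall q, List.In q l -> 0 <= F q) -> 0 <= \sum_(q <- l) F q.
Proof.
elim: l => [|a l IH] h; first by rewrite big_nil.
rewrite big_cons addr_ge0 //; [apply: h; by left | apply: IH => q hq; apply: h; by right].
Qed.

Lemma sum_ge_term (l : seq (nat * vec)) (F : nat * vec -> int) p :
  (forall q, List.In q l -> 0 <= F q) -> List.In p l -> F p <= \sum_(q <- l) F q.
Proof.
elim: l => [|a l IH] h //= [<-|hp]; rewrite big_cons.
  by rewrite lerDl; apply: sum_ge0 => q hq; apply: h; right.
apply: ler_wpDl; [apply: h; by left | apply: IH => // q hq; apply: h; by right].
Qed.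

Lemma sum_eq0 (l : seq (nat * vec)) (F : nat * vec -> int) :
  (forall q, List.In q l -> F q = 0) -> \sum_(q <- l) F q = 0.
Proof.
elim: l => [|a l IH] h; first by rewrite big_nil.
rewrite big_cons h ?IH ?add0r //; [move=> q hq; apply: h; by right | by left].
Qed.

Definition Irr (L : vec -> Prop) (u : vec) : Prop :=
  nonneg_part L u /\ ~ veq u vzero /\
  forall v, nonneg_part L v -> ~ veq v vzero -> (forall i, v i <= u i) -> veq v u.

Lemma nz_ex (u : vec) : ~ veq u vzero -> exists i, u i <> 0.
Proof.
move=> h; apply: NNPP => hno; apply: h => i; apply: NNPP => hi; apply: hno; by exists i.
Qed.

Lemma irr_in (S : vec -> Prop) L u : generates S (nonneg_part L) -> Irr L u -> S u.
Proof.
move=> [hSM hgen] [hMu [hnz hmin]].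
have [l [hl hsum]] := hgen u hMu.
have [i hi] := nz_ex hnz.
have [p [hp hpi]] : exists p, List.In p l /\ (p.1)%:Z * p.2 i <> 0.
  apply: NNPP => hno; apply: hi; rewrite hsum; apply: sum_eq0 => q hq.
  by apply: NNPP => hq0; apply: hno; exists q.
have [hL2 hpos2] := hSM _ (hl _ hp).
have hle : forall k, p.2 k <= u k.
  move=> k; rewrite hsum.
  apply: le_trans (sum_ge_term (F := fun q => (q.1)%:Z * q.2 k) _ hp).
    have := hpos2 k; have : (p.1 <> 0)%N by move=> e; apply: hpi; rewrite e mul0r.
    move=> h1 h2 /=; nia.
  move=> q hq /=; apply: mulr_ge0 => //; exact: (hSM _ (hl _ hq)).2.
have hnz2 : ~ veq p.2 vzero.
  by move=> h; apply: hpi; rewrite h /vzero mulr0.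
have := hmin _ (hSM _ (hl _ hp)) hnz2 hle.
by move/vext <-; exact: hl.
Qed.

Lemma sum_ord_ge (n : nat) (F : nat -> int) i : (forall k, 0 <= F k) -> (i < n)%N ->
  F i <= \sum_(k < n) F k.
Proof.
move=> h hi; rewrite (bigD1 (Ordinal hi)) //= lerDl.
by apply: sumr_ge0 => k _.
Qed.

Lemma decomp L : is_lattice L -> forall (N n : nat) u, nonneg_part L u ->
  (forall i, (n <= i)%N -> u i = 0) -> \sum_(i < n) u i < N%:Z -> nn_comb (Irr L) u.
Proof.
move=> hL; elim=> [|N IH] n u hu hn hsum.
  have : 0 <= \sum_(i < n) u i by apply: sumr_ge0 => i _; exact: hu.2.
  lia.
case: (classic (veq u vzero)) => [h0|hnz].
  by exists [::]; split=> // i; rewrite big_nil; exact: h0.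
case: (classic (Irr L u)) => [hI|hnI].
  exists [:: (1%N, u)]; split; first by move=> p /= [<-|[]].
  by move=> i; rewrite big_cons big_nil /= mul1r addr0.
have [v [hv [hvnz [hvle hvu]]]] : exists v, nonneg_part L v /\ ~ veq v vzero /\
    (forall i, v i <= u i) /\ ~ veq v u.
  apply: NNPP => hno; apply: hnI; split; first done; split; first done.
  move=> v hv hvnz hvle; apply: NNPP => hvu; apply: hno; by exists v.
set w := vsub u v.
have hw : nonneg_part L w.
  split; first exact: hL.2.2 _ _ hu.1 hv.1.
  by move=> i; rewrite /w /vsub subr_ge0.
have hwnz : ~ veq w vzero.
  move=> h; apply: hvu => i; have := h i; rewrite /w /vsub /vzero; lia.
have hvn : forall i, (n <= i)%N -> v i = 0.
  by move=> i hi; have := hvle i; have := hv.2 i; rewrite hn //; lia.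
have hwn : forall i, (n <= i)%N -> w i = 0.
  by move=> i hi; rewrite /w /vsub hn // hvn // subr0.
have hsplit : \sum_(i < n) u i = \sum_(i < n) v i + \sum_(i < n) w i.
  rewrite -big_split /=; apply: eq_bigr => i _; rewrite /w /vsub; lia.
have hpos : forall x : vec, ~ veq x vzero -> (forall i, 0 <= x i) ->
    (forall i, (n <= i)%N -> x i = 0) -> 0 < \sum_(i < n) x i.
  move=> x hx hx0 hxn; have [i hi] := nz_ex hx.
  have hin : (i < n)%N by rewrite ltnNge; apply/negP => h; apply: hi; exact: hxn.
  have := sum_ord_ge hx0 hin; have := hx0 i; lia.
have pv := hpos _ hvnz hv.2 hvn.
have pw := hpos _ hwnz hw.2 hwn.
have [lv [hlv1 hlv2]] := IH n v hv hvn ltac:(lia).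
have [lw [hlw1 hlw2]] := IH n w hw hwn ltac:(lia).
exists (lv ++ lw); split.
  by move=> p /List.in_app_iff [h|h]; [exact: hlv1 | exact: hlw1].
move=> i; rewrite big_cat /= -hlv2 -hlw2 /w /vsub; lia.
Qed.

Lemma hb_irr (S : vec -> Prop) L : is_lattice L -> hilbert_basis S (nonneg_part L) ->
  forall u, S u -> Irr L u.
Proof.
move=> hL [[hSM hgen] hmin] u hu.
pose S' := fun v => S v /\ Irr L v.
have hgen' : generates S' (nonneg_part L).
  split; first by move=> v [h _]; exact: hSM.
  move=> v hv; have [n hn] := hL.1 v hv.1.
  have [l [hl1 hl2]] := @decomp L hL (absz (\sum_(i < n) v i)).+1 n v hv hn ltac:(lia).
  exists l; split=> // p hp; split; last exact: hl1.
  exact: irr_in (conj hSM hgen) (hl1 _ hp).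
by have [] := hmin S' (fun v h => h.1) hgen' u hu.
Qed.
Lemma cg01 (c g : int) : 0 < g -> 0 <= c * g * g -> `|c * g| <= `|g| -> c * g = 0 \/ c * g = g.
Proof. move=> h1 h2 h3.
have c0 : 0 <= c by nia.
have c1 : c <= 1 by nia.
have : c = 0 \/ c = 1 by lia.
by case=> ->; [left; rewrite mul0r | right; rewrite mul1r].
Qed.

Lemma cgle (c g : int) : 0 < g -> 0 < c * g -> 0 <= g * (c * g) /\ `|g| <= `|c * g|.
Proof. move=> h1 h2. have : 1 <= c by nia. nia. Qed.

Lemma graver_opp L w : is_lattice L -> graver L w -> graver L (vopp w).
Proof.
move=> hL [hw [hnz hmin]]; split; first exact: L_opp.
split.
  by move=> h; apply: hnz => i; have := h i; rewrite /vopp /vzero; lia.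
move=> v hv hvnz hle.
have h1 : ~ veq (vopp v) vzero.
  by move=> h; apply: hvnz => i; have := h i; rewrite /vopp /vzero; lia.
have h2 : conf_le (vopp v) w.
  by move=> i; have := hle i; rewrite /vopp !normrN mulNr mulrN.
by move=> i; have := hmin _ (L_opp hL hv) h1 h2 i; rewrite /vopp; lia.
Qed.

Lemma irr_graver L w : Irr L w -> graver L w.
Proof.
move=> [[hw hpos] [hnz hmin]]; split=> //; split=> // v hv hvnz hle.
have hv' : forall i, 0 <= v i /\ v i <= w i.
  by move=> i; have [a b] := hle i; have := hpos i; nia.
apply: hmin => //; last by move=> i; exact: (hv' i).2.
by split=> // i; exact: (hv' i).1.
Qed.

Lemma graver_irr L w : graver L w -> (forall i, 0 <= w i) -> Irr L w.
Proof.
move=> [hw [hnz hmin]] hpos; split; first by [].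
split=> // v [hv hvp] hvnz hle; apply: hmin => // i; split; first exact: mulr_ge0.
by rewrite !ger0_norm.
Qed.

Lemma ge_graver L g i j : is_lattice L -> sym_invariant L -> is_gcd_entries L g ->
  (forall a, ~ L (ev g a)) -> 0 < g -> i != j -> graver L (ge g i j).
Proof.
move=> hL hS hg hP gpos hij.
have hji : j != i by rewrite eq_sym.
split; first exact: L_ge_move hS (L_gL hL hS hg) _ hij.
split.
  by move=> h; have := h i; rewrite /ge eqxx /vzero; lia.
move=> v hv hvnz hle.
have hk : forall k, k != i -> k != j -> v k = 0.
  move=> k hki hkj; have [_ b] := hle k.
  by move: b; rewrite /ge (negbTE hki) (negbTE hkj) normr0; lia.
have hvi : v i = 0 \/ v i = g.
  have [a b] := hle i; move: a b; rewrite /ge eqxx.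
  have /dvdzP [c ->] := hg.2.1 v i hv.
  by move=> a b; apply: cg01.
have hvj : v j = 0 \/ v j = - g.
  have [a b] := hle j; move: a b; rewrite /ge eqxx (negbTE hji).
  have /dvdzP [c ->] := hg.2.1 v j hv.
  rewrite normrN => a b.
  have a' : 0 <= - c * g * g by rewrite !mulNr -mulrN.
  have b' : `|- c * g| <= `|g| by rewrite mulNr normrN.
  by have := cg01 gpos a' b'; rewrite mulNr; lia.
case: hvi => hvi; case: hvj => hvj.
- exfalso; apply: hvnz => k.
  case: (eqVneq k i) => [->//|hki]; case: (eqVneq k j) => [->//|hkj]; exact: hk.
- exfalso; apply: (hP j).
  suff -> : ev g j = vopp v by exact: L_opp.
  apply: vext => k; rewrite /ev /vopp.
  case: (eqVneq k j) => [->|hkj]; first by rewrite hvj opprK.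
  case: (eqVneq k i) => [->|hki]; first by rewrite hvi oppr0.
  by rewrite hk // oppr0.
- exfalso; apply: (hP i).
  suff -> : ev g i = v by [].
  apply: vext => k; rewrite /ev.
  case: (eqVneq k i) => [->|hki]; first by rewrite hvi.
  case: (eqVneq k j) => [->|hkj]; first by rewrite hvj.
  by rewrite hk.
- move=> k; rewrite /ge.
  case: (eqVneq k i) => [->|hki]; first by rewrite hvi.
  case: (eqVneq k j) => [->|hkj]; first by rewrite hvj.
  by rewrite hk.
Qed.

Lemma mixed_graver L g w i j : is_lattice L -> sym_invariant L -> is_gcd_entries L g ->
  graver L w -> 0 < w i -> w j < 0 ->
  w = ge g i j /\ (forall a, ~ L (ev g a)) /\ 0 < g.
Proof.
move=> hL hS hg [hw [hnz hmin]] hi hj.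
have hij : i != j by apply/eqP => e; subst j; lia.
have hji : j != i by rewrite eq_sym.
have /dvdzP [ci hci] := hg.2.1 w i hw.
have /dvdzP [cj hcj] := hg.2.1 w j hw.
have gpos : 0 < g.
  have := hg.1; rewrite le0r => /orP [/eqP e|//].
  by move: hi; rewrite hci e mulr0; lia.
have hconf : conf_le (ge g i j) w.
  move=> k; rewrite /ge; case: (eqVneq k i) => [->|hki].
    rewrite hci; apply: cgle => //; rewrite -hci //.
  case: (eqVneq k j) => [->|hkj].
    move: hj; rewrite hcj => hj'; have : cj <= -1 by nia.
    move=> ?; split; nia.
  by rewrite mul0r normr0.
have hgL := L_ge_move hS (L_gL hL hS hg) (isT : 0%N != 1%N) hij.
have e1 := hmin _ hgL ltac:(by move=> h; have := h i; rewrite /ge eqxx /vzero; lia) hconf.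
split; first by apply: vext => k; exact: esym (e1 k).
split=> // a ha.
have hevi : L (ev g i).
  case: (eqVneq a i) => [<-//|hai].
  suff -> : ev g i = vsub (ev g a) (ge g a i).
    by apply: hL.2.2 => //; exact: L_ge_move hS (L_gL hL hS hg) _ hai.
  apply: vext => k; rewrite /vsub /ev /ge.
  case: (eqVneq k a) => [->|hka]; first by rewrite (negbTE hai) subrr.
  case: (eqVneq k i) => [_|hki]; first by rewrite sub0r opprK.
  by rewrite subr0.
have hconf2 : conf_le (ev g i) w.
  move=> k; rewrite /ev; case: (eqVneq k i) => [->|hki].
    rewrite hci; apply: cgle => //; rewrite -hci //.
  by rewrite mul0r normr0.
have := hmin _ hevi ltac:(by move=> h; have := h i; rewrite /ev eqxx /vzero; lia) hconf2 j.
by rewrite /ev (negbTE hji); lia.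
Qed.
Definition Pg (L : vec -> Prop) (g : int) := forall a, ~ L (ev g a).

Lemma main_G L H g (X : seq vec) : is_lattice L -> sym_invariant L ->
  equivariant_hilbert_basis H (nonneg_part L) -> is_gcd_entries L g ->
  (forall x, List.In x X -> x = gvec g /\ Pg L g /\ 0 < g) ->
  (Pg L g -> 0 < g -> List.In (gvec g) X) ->
  equivariant_graver_basis L (H ++ map vopp H ++ X).
Proof.
move=> hL hS hHB hg hX1 hX2 w; split.
- move=> [s [u [hs [[v [hv hvu]] hact]]]].
  have e := vext hvu; subst v.
  case/List.in_app_iff: hv => [hv|/List.in_app_iff [hv|hv]].
  + apply: irr_graver; apply: (hb_irr hL hHB).
    by exists s, u; split=> //; split=> //; exists u.
  + have [h [eh hh]] := (proj1 (List.in_map_iff _ _ _) hv).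
    have hw' : sym_orbit (setof H) (vopp w).
      exists s, h; split=> //; split; first by exists h.
      by move=> i; rewrite /vopp hact -eh /vopp opprK.
    have := graver_opp hL (irr_graver (hb_irr hL hHB hw')).
    suff -> : vopp (vopp w) = w by [].
    by apply: vext => i; rewrite /vopp opprK.
  + have [eu [hP gpos]] := hX1 _ hv; subst u.
    have [hinj _] := hs.
    have -> : w = ge g (s 0%N) (s 1%N).
      apply: vext => m; have [k <-] := fperm_surj hs m.
      by rewrite hact /gvec /ge !(inj_eq hinj).
    by apply: ge_graver => //; rewrite (inj_eq hinj).
- move=> hgw.
  case: (classic (forall i, 0 <= w i)) => [hpos|hnpos].
    have [s [u [hs [[v [hv hvu]] hact]]]] := irr_in hHB.1 (graver_irr hgw hpos).
    exists s, u; split=> //; split=> //; exists v; split=> //.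
    by apply/List.in_app_iff; left.
  case: (classic (forall i, w i <= 0)) => [hneg|hnneg].
    have hg' := graver_opp hL hgw.
    have hp' : forall i, 0 <= vopp w i by move=> i; rewrite /vopp oppr_ge0.
    have [s [u [hs [[v [hv hvu]] hact]]]] := irr_in hHB.1 (graver_irr hg' hp').
    exists s, (vopp u); split=> //; split.
      exists (vopp v); split; last by move=> i; rewrite /vopp hvu.
      apply/List.in_app_iff; right; apply/List.in_app_iff; left; exact: List.in_map.
    by move=> i; have := hact i; rewrite /vopp; lia.
  have [i hi] : exists i, 0 < w i.
    apply: NNPP => h; apply: hnneg => i; rewrite leNgt; apply/negP => hi; apply: h; by exists i.
  have [j hj] : exists j, w j < 0.
    apply: NNPP => h; apply: hnpos => k; rewrite leNgt; apply/negP => hk; apply: h; by exists k.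
  have [ew [hP gpos]] := mixed_graver hL hS hg hgw hi hj.
  have hij : i != j by apply/eqP => e; subst j; lia.
  have [s [hs [hs0 hs1]]] := two_perm hij.
  exists s, (gvec g); split=> //; split.
    exists (gvec g); split=> //; apply/List.in_app_iff; right; apply/List.in_app_iff; right.
    exact: hX2.
  have [hinj _] := hs.
  by move=> k; rewrite ew -hs0 -hs1 /ge /gvec !(inj_eq hinj).
Qed.

Lemma G_props (H X : seq vec) g : (forall x, List.In x X -> x = gvec g) ->
  (forall h, List.In h H -> memv h (H ++ map vopp H ++ X) /\ memv (vopp h) (H ++ map vopp H ++ X)) /\
  (forall v, List.In v (H ++ map vopp H ++ X) ->
       (exists h, List.In h H /\ (veq v h \/ veq v (vopp h))) \/
       veq v (gvec g) \/ veq v (vopp (gvec g))).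
Proof.
move=> hX; split.
  move=> h hh; split.
    by exists h; split=> //; apply/List.in_app_iff; left.
  exists (vopp h); split=> //; apply/List.in_app_iff; right; apply/List.in_app_iff; left.
  exact: List.in_map.
move=> v /List.in_app_iff [hv|/List.in_app_iff [hv|hv]].
- by left; exists v; split=> //; left.
- have [h [<- hh]] := (proj1 (List.in_map_iff _ _ _) hv).
  by left; exists h; split=> //; right.
- by right; left; rewrite (hX v hv).
Qed.

Unset Implicit Arguments.

Theorem theorem4p9 (L : vec -> Prop) (H : seq vec) (gL : int) :
  is_lattice L -> sym_invariant L ->
  equivariant_hilbert_basis H (nonneg_part L) ->
  is_gcd_entries L gL ->
  exists G : seq vec,
    equivariant_graver_basis L G /\
    (forall h, List.In h H -> memv h G /\ memv (vopp h) G) /\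
    (forall v, List.In v G ->
       (exists h, List.In h H /\ (veq v h \/ veq v (vopp h))) \/
       veq v (gvec gL) \/ veq v (vopp (gvec gL))).
Proof.
move=> hL hS hHB hg.
case: (classic (Pg L gL /\ 0 < gL)) => [[hP gpos]|hno].
- exists (H ++ map vopp H ++ [:: gvec gL]); split.
    apply: (main_G hL hS hHB hg).
      move=> x [ex|[]]; split; [by rewrite ex | split; [exact: hP | exact: gpos]].
    by move=> _ _; left.
  apply: G_props => x [ex|[]]; by rewrite ex.
- exists (H ++ map vopp H ++ [::]); split.
    apply: (main_G hL hS hHB hg).
      by move=> x [].
    by move=> h1 h2; exfalso; apply: hno.
  apply: G_props; by move=> x [].
Qed.
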